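(* The following two conditions are equivalent: (1) for each relevant pair $\langle m_1,m_2\rangle$ of a state $p\in Q^2$, $\nu(p)$ is a most general equalizer (mge) for $\langle m_1,m_2\rangle$; (2) for all states $p,q\in Q^2$ such that $\rho(p)=\langle m_1,m_2\rangle$ and $\rho(q)=\langle n_1,n_2\rangle$ are defined, and for each transition $\langle p,\langle u_1,u_2\rangle,q\rangle\in\Delta_2$, $\eta(m_1u_1,m_2u_2)$ is a mge of $\rho(q)$.
   Context: Let $\mathcal{M}=\langle M,\circ,e\rangle$ be a monoid. A tuple $\langle m_1,\dots,m_n\rangle\in M^n$ is equalizable if there is $\langle x_1,\dots,x_n\rangle\in M^n$ (an equalizer) with $m_1x_1=\dots=m_nx_n$; an equalizer $\langle x_1,\dots,x_n\rangle$ is a most general equalizer (mge) if every equalizer has the form $\langle x_1x,\dots,x_nx\rangle$ for some $x\in M$. $\mathcal{M}$ is an mge monoid if it has right cancellation ($ac=bc\Rightarrow a=b$) and every equalizable pair has an mge. Let $\eta:M^2\to M^2$ be a function that returns an mge $\eta(m,m')$ for each equalizable pair $\langle m,m'\rangle$. Let $\mathcal{T}=\langle \Sigma^*\times\mathcal{M},Q,I,F,\Delta\rangle$ be a trimmed (every state accessible and co-accessible) monoidal finite-state transducer with output in the mge monoid $\mathcal{M}$, where $\Delta\subseteq Q\times((\Sigma\cup\{\varepsilon\})\times M)\times Q$ and $\Delta^*$ is its generalized transition relation. Let $\mathcal{A}^2=\langle \mathcal{M}\times\mathcal{M},Q\times Q,I\times I,F\times F,\Delta_2\rangle$ be a squared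 output automaton for $\mathcal{T}$, i.e. $\Delta_2$ is finite and $\langle\langle p_1,p_2\rangle,\langle m,n\rangle,\langle q_1,q_2\rangle\rangle\in\Delta_2^*$ iff there is $u\in\Sigma^*$ with $\langle p_1,\langle u,m\rangle,q_1\rangle\in\Delta^*$ and $\langle p_2,\langle u,n\rangle,q_2\rangle\in\Delta^*$. For a state $\langle q_1,q_2\rangle$ lying on a successful path of $\mathcal{A}^2$, a pair $\langle m_1,m_2\rangle$ is a relevant pair for $\langle q_1,q_2\rangle$ if $\langle\langle i_1,i_2\rangle,\langle m_1,m_2\rangle,\langle q_1,q_2\rangle\rangle\in\Delta_2^*$ for some $\langle i_1,i_2\rangle\in I\times I$. Let $\langle\rho,\nu\rangle$ be a valuation of $\mathcal{A}^2$: $\rho,\nu:Q^2\to M^2$ are partial functions where $\rho(q)$ is some chosen relevant pair for $q$ if one exists (undefined otherwise), with $\rho(q)=\langle e,e\rangle$ for $q\in I^2$ having a relevant pair; and $\nu(q)=\langle e,e\rangle$ if $\rho(q)$ is defined and of the form $\langle m,m\rangle$, $\nu(q)=\eta(\rho(q))$ if $\rho(q)$ is defined and equalizable, and $\nu(q)$ undefined otherwise. *)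

(* Defs.v *)
From mathcomp Require Import all_boot.
From Stdlib Require List.

Set Implicit Arguments.
Unset Strict Implicit.
Unset Printing Implicit Defensive.

Section Monoids.
Variables (M : Type) (op : M -> M -> M) (e : M).

Definition is_monoid : Prop :=
  (forall a b c, op a (op b c) = op (op a b) c) /\
  (forall a, op e a = a) /\ (forall a, op a e = a).

Definition right_cancellative : Prop :=
  forall a b c, op a c = op b c -> a = b.

Definition is_equalizer (m1 m2 x1 x2 : M) : Prop := op m1 x1 = op m2 x2.

Definition equalizable (m1 m2 : M) : Prop :=
  exists x1 x2, is_equalizer m1 m2 x1 x2.

Definition is_mge (m1 m2 x1 x2 : M) : Prop :=
  is_equalizer m1 m2 x1 x2 /\
  forall y1 y2, is_equalizer m1 m2 y1 y2 ->
    exists x, y1 = op x1 x /\ y2 = op x2 x.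

Definition mge_monoid : Prop :=
  is_monoid /\ right_cancellative /\
  forall m1 m2, equalizable m1 m2 -> exists x1 x2, is_mge m1 m2 x1 x2.

Definition mge_function (eta : M * M -> M * M) : Prop :=
  forall m1 m2, equalizable m1 m2 -> is_mge m1 m2 (eta (m1, m2)).1 (eta (m1, m2)).2.

End Monoids.

(** Monoidal finite-state transducer ⟨Σ^* × M, Q, I, F, Δ⟩ with
    Δ ⊆ Q × ((Σ ∪ {ε}) × M) × Q, given as a finite list; ε is [None]. *)
Section Transducer.
Variables (M : Type) (op : M -> M -> M) (e : M).
Variables (Sigma Q : finType).
Variable Delta : list (Q * (option Sigma * M) * Q).

Definition opt_word (a : option Sigma) : seq Sigma :=
  match a with Some x => [:: x] | None => [::] end.

Inductive delta_star : Q -> seq Sigma -> M -> Q -> Prop :=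
  | ds_refl q : delta_star q [::] e q
  | ds_step p a m q w m' r :
      List.In (p, (a, m), q) Delta -> delta_star q w m' r ->
      delta_star p (opt_word a ++ w) (op m m') r.

Definition trimmed (I F : {set Q}) : Prop :=
  forall q,
    (exists i w m, i \in I /\ delta_star i w m q) /\
    (exists f w m, f \in F /\ delta_star q w m f).
End Transducer.

(** Squared output automaton ⟨M × M, Q × Q, I × I, F × F, Δ₂⟩. *)
Section Squared.
Variables (M : Type) (op : M -> M -> M) (e : M).
Variable Q : finType.
Variable Delta2 : list ((Q * Q) * (M * M) * (Q * Q)).

Inductive delta2_star : Q * Q -> M * M -> Q * Q -> Prop :=
  | d2s_refl q : delta2_star q (e, e) q
  | d2s_step p u1 u2 q n1 n2 r :
      List.In (p, (u1, u2), q) Delta2 -> delta2_star q (n1, n2) r ->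
      delta2_star p (op u1 n1, op u2 n2) r.

Variables (I F : {set Q}).

Definition init2 (q : Q * Q) : bool := (q.1 \in I) && (q.2 \in I).
Definition final2 (q : Q * Q) : bool := (q.1 \in F) && (q.2 \in F).

Definition on_successful_path (q : Q * Q) : Prop :=
  (exists i mm, init2 i /\ delta2_star i mm q) /\
  (exists f mm, final2 f /\ delta2_star q mm f).

Definition relevant_pair (q : Q * Q) (m1 m2 : M) : Prop :=
  on_successful_path q /\ exists i, init2 i /\ delta2_star i (m1, m2) q.

(** ⟨ρ,ν⟩ is a valuation of A² (partial functions as options). *)
Definition is_valuation (eta : M * M -> M * M)
    (rho nu : Q * Q -> option (M * M)) : Prop :=
  (forall q m1 m2, rho q = Some (m1, m2) -> relevant_pair q m1 m2) /\
  (forall q, rho q = None -> ~ exists m1 m2, relevant_pair q m1 m2) /\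
  (forall q, init2 q -> (exists m1 m2, relevant_pair q m1 m2) ->
     rho q = Some (e, e)) /\
  (forall q, match rho q with
             | None => nu q = None
             | Some (m1, m2) =>
                 (m1 = m2 -> nu q = Some (e, e)) /\
                 (m1 <> m2 -> equalizable op m1 m2 -> nu q = Some (eta (m1, m2))) /\
                 (~ equalizable op m1 m2 -> nu q = None)
             end).
End Squared.

(* Main.v *)
Require Import Defs.
From mathcomp Require Import all_boot.
From Stdlib Require List Classical_Prop.
Set Implicit Arguments.
Unset Strict Implicit.

Section Aux.
Variables (M : Type) (op : M -> M -> M) (e : M).
Hypothesis assoc : forall a b c, op a (op b c) = op (op a b) c.
Hypothesis idl : forall a, op e a = a.
Hypothesis idr : forall a, op a e = a.

Definition sameEq (a b c d : M) :=
  forall y1 y2, op a y1 = op b y2 <-> op c y1 = op d y2.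

Lemma mge_char a b x1 x2 : is_mge op a b x1 x2 ->
  forall y1 y2, op a y1 = op b y2 <-> exists c, y1 = op x1 c /\ y2 = op x2 c.
Proof.
  intros [H1 H2] y1 y2; split.
  - intros H; apply H2; exact H.
  - intros [c [-> ->]]; rewrite !assoc; unfold is_equalizer in H1; rewrite H1; reflexivity.
Qed.

Lemma mge_transfer a b c d x1 x2 : sameEq a b c d ->
  is_mge op a b x1 x2 -> is_mge op c d x1 x2.
Proof.
  intros S [H1 H2]; split.
  - unfold is_equalizer; apply S; exact H1.
  - intros y1 y2 Hy; apply H2; unfold is_equalizer; apply S; exact Hy.
Qed.

Lemma mge_same a b c d x1 x2 : is_mge op a b x1 x2 -> is_mge op c d x1 x2 ->
  sameEq a b c d.
Proof.
  intros H H' y1 y2; pose proof (mge_char H y1 y2); pose proof (mge_char H' y1 y2); tauto.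
Qed.

Lemma sameEq_sym a b c d : sameEq a b c d -> sameEq c d a b.
Proof. intros S y1 y2; pose proof (S y1 y2); tauto. Qed.

Lemma sameEq_trans a b c d f g : sameEq a b c d -> sameEq c d f g -> sameEq a b f g.
Proof. intros S S' y1 y2; pose proof (S y1 y2); pose proof (S' y1 y2); tauto. Qed.

Lemma sameEq_mul a b c d u1 u2 : sameEq a b c d ->
  sameEq (op a u1) (op b u2) (op c u1) (op d u2).
Proof. intros S y1 y2; rewrite -!assoc; apply S. Qed.

Lemma left_cancel : mge_monoid op e -> forall m y1 y2, op m y1 = op m y2 -> y1 = y2.
Proof.
  intros [_ [RC Hm]] m y1 y2 Hy.
  destruct (Hm m m) as [c1 [c2 [Hc1 Hc2]]].
  { exists e, e; reflexivity. }
  destruct (Hc2 e e (erefl _)) as [d [E1 E2]].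
  assert (c1 = c2) as <-. { apply (RC _ _ d); congruence. }
  destruct (Hc2 y1 y2 Hy) as [k [-> ->]]; reflexivity.
Qed.

Lemma mge_diag : mge_monoid op e -> forall m, is_mge op m m e e.
Proof.
  intros MM m; split.
  - reflexivity.
  - intros y1 y2 Hy; exists y1; rewrite idl; split; [reflexivity|].
    symmetry; apply (left_cancel MM Hy).
Qed.

Variable Q : finType.
Variable Delta2 : list ((Q * Q) * (M * M) * (Q * Q)).

Lemma concat s w t w' r : delta2_star op e Delta2 s w t -> delta2_star op e Delta2 t w' r ->
  delta2_star op e Delta2 s (op w.1 w'.1, op w.2 w'.2) r.
Proof.
  intros H; revert w' r; induction H as [q|p u1 u2 q n1 n2 r0 Hin H IH]; intros w' r H'.
  - destruct w'; cbn; rewrite !idl; exact H'.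
  - cbn; rewrite -!assoc. apply d2s_step with (q := q); [exact Hin|].
    exact (IH _ _ H').
Qed.

Lemma append1 s w t u t' : delta2_star op e Delta2 s w t -> List.In (t, u, t') Delta2 ->
  delta2_star op e Delta2 s (op w.1 u.1, op w.2 u.2) t'.
Proof.
  intros H Hin. destruct u as [u1 u2].
  apply (concat H). cbn. rewrite -{1}(idr u1) -{1}(idr u2). apply d2s_step with (q := t'); [exact Hin| apply d2s_refl].
Qed.
End Aux.

Theorem proposition4
  (M : Type) (op : M -> M -> M) (e : M)
  (eta : M * M -> M * M)
  (Sigma Q : finType) (I F : {set Q})
  (Delta : list (Q * (option Sigma * M) * Q))
  (Delta2 : list ((Q * Q) * (M * M) * (Q * Q)))
  (rho nu : Q * Q -> option (M * M)) :
  mge_monoid op e ->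
  mge_function op eta ->
  trimmed op e Delta I F ->
  (forall p1 p2 m n q1 q2,
     delta2_star op e Delta2 (p1, p2) (m, n) (q1, q2) <->
     exists u, delta_star op e Delta p1 u m q1 /\ delta_star op e Delta p2 u n q2) ->
  is_valuation op e Delta2 I F eta rho nu ->
  ((forall p m1 m2, relevant_pair op e Delta2 I F p m1 m2 ->
      exists x1 x2, nu p = Some (x1, x2) /\ is_mge op m1 m2 x1 x2)
   <->
   (forall p q m1 m2 n1 n2 u1 u2,
      rho p = Some (m1, m2) -> rho q = Some (n1, n2) ->
      List.In (p, (u1, u2), q) Delta2 ->
      equalizable op (op m1 u1) (op m2 u2) /\
      is_mge op n1 n2 (eta (op m1 u1, op m2 u2)).1 (eta (op m1 u1, op m2 u2)).2)).
Proof.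
  intros MM Heta _ _ [V1 [V2 [V3 V4]]].
  pose proof MM as [[assoc [idl idr]] _].
  assert (nu_mge : forall q n1 n2, rho q = Some (n1, n2) -> equalizable op n1 n2 ->
            exists x1 x2, nu q = Some (x1, x2) /\ is_mge op n1 n2 x1 x2).
  { intros q n1 n2 Hq Heq. specialize (V4 q). rewrite Hq in V4.
    destruct V4 as [A [B _]].
    destruct (Classical_Prop.classic (n1 = n2)) as [E|E].
    - exists e, e; split; [exact (A E)|]. subst n2; apply (mge_diag idl MM).
    - exists (eta (n1, n2)).1, (eta (n1, n2)).2; split.
      + rewrite (B E Heq); destruct (eta (n1, n2)); reflexivity.
      + apply Heta; exact Heq. }
  split.
  - intros H1 p q m1 m2 n1 n2 u1 u2 Hp Hq Hin.
    destruct (V1 _ _ _ Hp) as [Rp [i [Hi Hip]]].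
    destruct (V1 _ _ _ Hq) as [Rq _].
    assert (Hrel : relevant_pair op e Delta2 I F q (op m1 u1) (op m2 u2)).
    { split; [exact Rq|]. exists i; split; [exact Hi|].
      exact (append1 assoc idl idr Hip Hin). }
    destruct (H1 _ _ _ Hrel) as [x1 [x2 [Hn Hm]]].
    destruct (H1 q n1 n2 (V1 _ _ _ Hq)) as [y1 [y2 [Hn' Hm']]].
    rewrite Hn in Hn'. injection Hn' as <- <-.
    assert (Eq : equalizable op (op m1 u1) (op m2 u2)).
    { exists x1, x2; exact (proj1 Hm). }
    split; [exact Eq|].
    apply (mge_transfer (mge_same assoc Hm Hm')). apply Heta; exact Eq.
  - intros H2.
    assert (Main : forall s w t, delta2_star op e Delta2 s w t ->
      forall a b r1 r2, (exists i, init2 I i /\ delta2_star op e Delta2 i (a, b) s) ->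
      (exists f mm, final2 F f /\ delta2_star op e Delta2 t mm f) ->
      rho s = Some (r1, r2) -> equalizable op r1 r2 -> sameEq op a b r1 r2 ->
      exists t1 t2, rho t = Some (t1, t2) /\ equalizable op t1 t2 /\
        sameEq op (op a w.1) (op b w.2) t1 t2).
    { intros s w t H; induction H as [q|p u1 u2 q n1 n2 r Hin Hq IH];
        intros a b r1 r2 [i [Hi Hip]] Hco Hs Heqr HS.
      - exists r1, r2; split; [exact Hs|]; split; [exact Heqr|]. cbn; rewrite !idr; exact HS.
      - pose proof (append1 assoc idl idr Hip Hin) as Hiq; cbn in Hiq.
        destruct Hco as [f [mm [Hf Hrf]]].
        pose proof (concat assoc idl Hq Hrf) as Hqf.
        assert (Rq : relevant_pair op e Delta2 I F q (op a u1) (op b u2)).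
        { split; [split|].
          - exists i, (op a u1, op b u2); split; assumption.
          - exists f, (op n1 mm.1, op n2 mm.2); split; assumption.
          - exists i; split; assumption. }
        destruct (rho q) as [[k1 k2]|] eqn:Hk; last first.
        { exfalso; apply (V2 q Hk); exists (op a u1), (op b u2); exact Rq. }
        destruct (H2 p q r1 r2 k1 k2 u1 u2 Hs Hk Hin) as [Eq Hmg].
        assert (Ek : equalizable op k1 k2).
        { exists (eta (op r1 u1, op r2 u2)).1, (eta (op r1 u1, op r2 u2)).2; exact (proj1 Hmg). }
        assert (Sk : sameEq op (op a u1) (op b u2) k1 k2).
        { apply (sameEq_trans (sameEq_mul assoc u1 u2 HS)).
          exact (mge_same assoc (Heta _ _ Eq) Hmg). }
        destruct (IH (op a u1) (op b u2) k1 k2 (ex_intro _ i (conj Hi Hiq))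
                   (ex_intro _ f (ex_intro _ mm (conj Hf Hrf))) (erefl _) Ek Sk)
          as [t1 [t2 [Ht [Et St]]]].
        exists t1, t2; split; [exact Ht|]; split; [exact Et|].
        cbn; rewrite !assoc; exact St. }
    intros p m1 m2 Hrel. pose proof Hrel as [[_ Hco] [i [Hi Hip]]].
    destruct Hco as [f [mm [Hf Hpf]]].
    assert (Hri : rho i = Some (e, e)).
    { apply V3; [exact Hi|]. exists e, e; split; [split|].
      - exists i, (e, e); split; [exact Hi| apply d2s_refl].
      - exists f, (op m1 mm.1, op m2 mm.2); split; [exact Hf|].
        exact (concat assoc idl Hip Hpf).
      - exists i; split; [exact Hi| apply d2s_refl]. }
    destruct (Main _ _ _ Hip e e e e (ex_intro _ i (conj Hi (d2s_refl _ _ _ _))) 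
               (ex_intro _ f (ex_intro _ mm (conj Hf Hpf))) Hri
               (ex_intro _ e (ex_intro _ e (erefl _))) (fun y1 y2 => iff_refl _))
      as [t1 [t2 [Ht [Et St]]]].
    cbn in St; rewrite !idl in St.
    destruct (nu_mge p t1 t2 Ht Et) as [x1 [x2 [Hn Hm]]].
    exists x1, x2; split; [exact Hn|].
    exact (mge_transfer (sameEq_sym St) Hm).
Qed.
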